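(* Assume the law of excluded middle. If $\alpha\in\mathrm{ord}$ is bounded, i.e. $\alpha\le\underline m$ for some $m\in\mathbb N$, then $\alpha$ is finite, i.e. $\alpha=_{\mathrm{Ord}}\underline n$ for some $n\in\mathbb N$.
   Context: Let $\mathfrak F$ be a set of index sets such that: $\mathbb N$ and each $\mathbb N_k=\{n\in\mathbb N:n<k\}$ ($k\ge 0$) belong to $\mathfrak F$; every finitely enumerated subset of an element of $\mathfrak F$ is isomorphic to an element of $\mathfrak F$; for $J\in\mathfrak F$ the set of finitely enumerated subsets of $J$ is isomorphic to an element of $\mathfrak F$; $\mathfrak F$ is stable under disjoint unions indexed by elements of $\mathfrak F$. A finitely enumerated subset of $A$ is one given by a map $\mathbb N_k\to A$; write $F\subseteq_f I$. The set $\mathrm{ord}$ is inductively generated by $\underline 0$ and, for every family $(\alpha_i)_{i\in I}$ with $I\in\mathfrak F$, $\alpha_i\in\mathrm{ord}$, an element $\mathrm S(\alpha_i)_{i\in I}$; for such $\alpha$, $I_\alpha=I$ and $\alpha_i$ are its definitional subordinals; $I_{\underline 0}=\emptyset$. $\mathrm{succ}(\beta)$ is $\mathrm S$ of the one-element family $(\beta)$, and $\underline{m+1}=\mathrm{succ}(\underline m)$. For a finite list $F$ in $I_\alpha$, $\alpha_F$ is the list of the $\alpha_i$, $i\in F$. Relations between an element and a nonempty finite list, by simultaneous induction: $\alpha\le\beta^1,\dots,\beta^m$ means $\alpha_i<\beta^1,\dots,\beta^m$ for all $i\in I_\alpha$; $\alpha<\beta^1,\dots,\beta^m$ means there exist $F_1\subseteq_f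 I_{\beta^1},\dots,F_m\subseteq_f I_{\beta^m}$, not all empty, with $\alpha\le\beta^1_{F_1},\dots,\beta^m_{F_m}$ (concatenated list). $\alpha=_{\mathrm{Ord}}\beta$ means $\alpha\le\beta$ and $\beta\le\alpha$. *)

(* Defs.v *)
From Stdlib Require Import List.
Import ListNotations.
Set Implicit Arguments.

(* A "set of index sets" F is presented as a Tarski-style universe:
   codes U, decoding El, together with distinguished codes for N and N_k. *)
Record IndexFamily := {
  U : Type;
  El : U -> Type;
  cN : U;
  cNk : nat -> U
}.

Definition Nk (k : nat) : Type := {n : nat | n < k}.

Definition iso (A B : Type) : Prop :=
  exists (f : A -> B) (g : B -> A),
    (forall a, g (f a) = a) /\ (forall b, f (g b) = b).

Definition fe_subset (A : Type) (k : nat) (f : Nk k -> A) : Type :=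
  {a : A | exists i, f i = a}.

Definition fe_subsets (A : Type) : Type := {k : nat & Nk k -> A}.

Record IndexFamilyAxioms (F : IndexFamily) : Prop := {
  ax_N : El F (cN F) = nat;
  ax_Nk : forall k, El F (cNk F k) = Nk k;
  ax_sub : forall (J : U F) (k : nat) (f : Nk k -> El F J),
      exists u : U F, iso (fe_subset f) (El F u);
  ax_pow : forall J : U F, exists u : U F, iso (fe_subsets (El F J)) (El F u);
  ax_sigma : forall (I : U F) (J : El F I -> U F),
      exists u : U F, iso {i : El F I & El F (J i)} (El F u)
}.

Inductive ord (F : IndexFamily) : Type :=
| OZero : ord F
| OSup : forall I : U F, (El F I -> ord F) -> ord F.

Arguments OZero {F}.

Definition Idx {F : IndexFamily} (a : ord F) : Type :=
  match a with OZero => Empty_set | @OSup _ J _ => El F J end.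

Definition subo {F : IndexFamily} (a : ord F) : Idx a -> ord F :=
  match a as a0 return Idx a0 -> ord F with
  | OZero => fun e => match e with end
  | @OSup _ J f => f
  end.

(* sel [b^1;...;b^m] cs  <->  cs = b^1_{F_1} ++ ... ++ b^m_{F_m}
   for some finite lists F_j of indices of I_{b^j}. *)
Inductive sel {F : IndexFamily} : list (ord F) -> list (ord F) -> Prop :=
| sel_nil : sel [] []
| sel_cons : forall (b : ord F) (bs : list (ord F)) (Fb : list (Idx b)) (rest : list (ord F)),
    sel bs rest -> sel (b :: bs) (map (subo b) Fb ++ rest).

(* alpha <= bs : for all i in I_alpha, alpha_i < bs, where
   alpha_i < bs : there are F_j, not all empty (i.e. the concatenated
   list is nonempty), with alpha_i <= concatenation. *)
Fixpoint ord_le {F : IndexFamily} (a : ord F) (bs : list (ord F)) : Prop :=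
  match a with
  | OZero => True
  | @OSup _ J f => forall i : El F J,
      exists cs, sel bs cs /\ cs <> [] /\ ord_le (f i) cs
  end.

Definition ord_lt {F : IndexFamily} (a : ord F) (bs : list (ord F)) : Prop :=
  exists cs, sel bs cs /\ cs <> [] /\ ord_le a cs.

Definition ord_eq {F : IndexFamily} (a b : ord F) : Prop :=
  ord_le a [b] /\ ord_le b [a].

Definition succ {F : IndexFamily} (b : ord F) : ord F :=
  OSup (cNk F 1) (fun _ => b).

Fixpoint nat_ord (F : IndexFamily) (n : nat) : ord F :=
  match n with
  | 0 => OZero
  | S m => succ (nat_ord F m)
  end.

(* Main.v *)
Require Import Defs.
From Stdlib Require Import List Lia.
Import ListNotations.

Section S.
Variable F : IndexFamily.
Variable HF : IndexFamilyAxioms F.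

Fixpoint R (a : ord F) (n : nat) {struct n} : Prop :=
  match n with
  | 0 => Idx a -> False
  | S n => forall i : Idx a, R (subo a i) n
  end.

Definition e1 : El F (cNk F 1).
Proof. rewrite (ax_Nk HF 1). exists 0. lia. Defined.

Lemma R_zero n : R OZero n.
Proof. destruct n; simpl; intros []. Qed.

Lemma R_mono : forall n a, R a n -> forall k, n <= k -> R a k.
Proof.
  induction n; intros a H k Hk.
  - destruct k; simpl in *; auto. intro i; exfalso; auto.
  - destruct k; [lia|]. simpl in *. intro i. apply IHn; auto. lia.
Qed.

Lemma R_le : forall n a, R a n -> ord_le a [nat_ord F n].
Proof.
  induction n; intros [|J f] H; simpl; auto.
  - intro i. exfalso. exact (H i).
  - intro i. exists [nat_ord F n]. split; [|split].
    + pose proof (@sel_cons F (succ (nat_ord F n)) [] [e1] [] sel_nil) as H0.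
      simpl in H0. exact H0.
    + discriminate.
    + apply IHn. exact (H i).
Qed.

Lemma sel_pred : forall bs cs, sel bs cs -> forall n,
  Forall (fun b => exists k, k <= n /\ b = nat_ord F k) bs ->
  Forall (fun c => exists k, S k <= n /\ c = nat_ord F k) cs.
Proof.
  induction 1; intros n Hb; auto.
  inversion Hb; subst. apply Forall_app; split; [|auto].
  destruct H2 as [k [Hk ->]]. apply Forall_forall. intros x Hx.
  apply in_map_iff in Hx. destruct Hx as [y [Hy _]]. subst.
  destruct k; simpl in y. destruct y. exists k. split; auto.
Qed.

Lemma le_R : forall a bs n,
  Forall (fun b => exists k, k <= n /\ b = nat_ord F k) bs ->
  ord_le a bs -> R a n.
Proof.
  induction a as [|J f IH]; intros bs n Hb Hle.
  - apply R_zero.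
  - simpl in Hle. destruct n; simpl; intro i;
    destruct (Hle i) as [cs [Hs [Hne Hc]]];
    pose proof (sel_pred _ _ Hs _ Hb) as Hf.
    + destruct cs as [|c cs]; [congruence|]. inversion Hf; subst.
      destruct H1 as [k [Hk _]]. lia.
    + apply (IH i cs n); auto. eapply Forall_impl; [|exact Hf].
      simpl. intros c [k [Hk Hc']]. exists k; split; [lia|auto].
Qed.

Variable LEM : forall P : Prop, P \/ ~ P.

Lemma max_pick : forall (P : nat -> Prop) b, (exists j, j <= b /\ P j) ->
  exists k, k <= b /\ P k /\ forall j, j <= b -> P j -> j <= k.
Proof.
  intros P b. induction b; intros [j [Hj Pj]].
  - exists j. split; auto. split; auto. intros. lia.
  - destruct (LEM (P (S b))) as [H|H].
    + exists (S b). split; auto.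
    + assert (j <= b). { destruct (PeanoNat.Nat.eq_dec j (S b)); subst; [tauto|lia]. }
      destruct IHb as [k [Kb [Pk Hk]]]. { exists j; auto. }
      exists k. split; [lia|]. split; auto. intros j' Hj' Pj'.
      destruct (PeanoNat.Nat.eq_dec j' (S b)); subst; [tauto|]. apply Hk; auto; lia.
Qed.

Lemma main : forall m a, R a m ->
  exists n, n <= m /\ R a n /\ ord_le (nat_ord F n) [a].
Proof.
  induction m; intros a H.
  - exists 0. repeat split; auto.
  - destruct a as [|J f].
    + exists 0. repeat split; auto. lia. apply R_zero.
    + simpl in H.
      destruct (LEM (exists i : El F J, True)) as [[i0 _]|Hn].
      * set (P := fun k => exists i, R (f i) k /\ ord_le (nat_ord F k) [f i]).
        destruct (max_pick P m) as [k [Km [[i1 [Hr Hl]] Hk]]].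
        { destruct (IHm (f i0) (H i0)) as [n [? [? ?]]]. exists n; split; auto.
          exists i0; auto. }
        exists (S k). split; [|split].
        -- destruct (IHm (f i1) (H i1)) as [n [? [? ?]]].
           lia.
        -- simpl. intro i. destruct (IHm (f i) (H i)) as [n [? [? ?]]].
           apply R_mono with n; auto. apply Hk; auto. exists i; auto.
        -- simpl. intro x. exists [f i1]. split; [|split].
           ++ pose proof (@sel_cons F (OSup J f) [] [i1] [] sel_nil) as H0.
              simpl in H0. exact H0.
           ++ discriminate.
           ++ exact Hl.
      * exists 0. repeat split; auto. lia. simpl. intro i. apply Hn. exists i; auto.
Qed.

End S.

Theorem corollary3p21 (F : IndexFamily) (HF : IndexFamilyAxioms F)
  (LEM : forall P : Prop, P \/ ~ P)
  (a : ord F) (m : nat) (Hb : ord_le a [nat_ord F m]) :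
  exists n : nat, ord_eq a (nat_ord F n).
Proof.
  assert (Hr : R F a m).
  { apply le_R with (bs := [nat_ord F m]); [|exact Hb]. constructor; [|constructor]. exists m; auto. }
  destruct (main F LEM _ _ Hr) as [n [_ [Hn Hl]]].
  exists n. split; auto. apply (R_le F HF). exact Hn.
Qed.
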